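(* Let $d\geqslant1$, $\varepsilon\geqslant0$, let $P\in C^1([0,\infty);[0,\infty))\cap C^2((0,\infty);[0,\infty))$ be convex with $\kappa:=P'(0)>0$, let $\theta>0$, and let $\tau$ be the solution of $\ddot\tau=2\kappa/\tau$, $\tau(0)=1$, $\dot\tau(0)=0$. Consider a nonnegative density $R(t,y)$ and a velocity field $U(t,y)$, $t\geqslant0$, $y\in\mathbb R^d$. Suppose that the mass $\int_{\mathbb R^d}R(t,y)\,\mathrm dy$ is bounded and that the pseudo-energy $$\mathcal E(t)=\frac1{2\tau^2}\int R|U|^2+\frac{\varepsilon^2}{2\tau^2}\int|\nabla\sqrt R|^2+\kappa\int(R|y|^2+R\ln R)+\frac{\tau^d}{\theta}\int G\!\left(\frac{\theta R}{\tau^d}\right)$$ satisfies $\mathcal E(t)\leqslant\Lambda$ for all $t\geqslant0$. Then there exists $C_0>0$ such that for all $t\geqslant0$, $$\frac1{2\tau^2}\int R|U|^2+\frac{\varepsilon^2}{2\tau^2}\int|\nabla\sqrt R|^2+\kappa\int R(1+|y|^2+|\ln R|)+\tau^d\int G\!\left(\frac{\theta R}{\tau^d}\right)\leqslant C_0.$$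
   Context: All integrals are over $\mathbb R^d$ in $y$. $G(u)=\int_0^u\int_0^v\frac{P'(\sigma)-P'(0)}{\sigma}\,\mathrm d\sigma\,\mathrm dv$. *)

(* Defs.v *)
From HB Require Import structures.
From mathcomp Require Import all_boot all_order all_algebra.
From mathcomp Require Import all_classical all_reals all_analysis.
Set Implicit Arguments. Unset Strict Implicit. Unset Printing Implicit Defensive.
Import Order.TTheory GRing.Theory Num.Theory.
Import numFieldNormedType.Exports.
Local Open Scope classical_set_scope.
Local Open Scope ring_scope.

Section defs.
Variable R : realType.
Local Notation mu := (@lebesgue_measure R).

(* R^n is represented by n.-tuple R (it carries the product = Borel
   sigma-algebra in MathComp-Analysis). *)

(* Integral over R^n of a nonnegative (extended-real valued) function,
   computed as an iterated Lebesgue integral (dy_1 outermost); by Tonelli it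
   is the Lebesgue integral over R^n of a nonnegative measurable function. *)
Fixpoint iint (n : nat) : (n.-tuple R -> \bar R) -> \bar R :=
  match n return (n.-tuple R -> \bar R) -> \bar R with
  | 0 => fun f => f [tuple]
  | n'.+1 => fun f =>
      (\int[mu]_r iint (fun x : n'.-tuple R => f (cons_tuple r x)))%E
  end.

Definition sint (n : nat) (f : n.-tuple R -> R) : \bar R :=
  (iint (fun y => (Num.max (f y) 0)%:E) - iint (fun y => (Num.max (- f y) 0)%:E))%E.

Definition sqnorm (n : nat) (y : n.-tuple R) : R := \sum_(i < n) (tnth y i) ^+ 2.

Definition partial (n : nat) (f : n.-tuple R -> R) (i : 'I_n) (y : n.-tuple R) : R :=
  derive1 (fun r : R => f [tuple (if j == i then r else tnth y j) | j < n]) (tnth y i).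

Definition gradsq (n : nat) (f : n.-tuple R -> R) (y : n.-tuple R) : R :=
  \sum_(i < n) (partial f i y) ^+ 2.

Definition Gfun (dP : R -> R) (u : R) : \bar R :=
  (\int[mu]_(v in `[0%R, u]) \int[mu]_(s in `[0%R, v]) ((dP s - dP 0) / s)%:E)%E.

Definition energy (d : nat) (eps kappa theta : R) (dP : R -> R) (tau : R -> R)
    (Rho : R -> d.-tuple R -> R) (U : R -> d.-tuple R -> d.-tuple R) (t : R)
    : \bar R :=
  ((1 / (2 * tau t ^+ 2))%R%:E * iint (fun y => (Rho t y * sqnorm (U t y))%R%:E)
   + (eps ^+ 2 / (2 * tau t ^+ 2))%R%:E
       * iint (fun y => (gradsq (fun z => Num.sqrt (Rho t z)) y)%R%:E)
   + kappa%:E * sint (fun y => Rho t y * sqnorm y + Rho t y * ln (Rho t y))%R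
   + (tau t ^+ d / theta)%R%:E
       * iint (fun y => Gfun dP (theta * Rho t y / tau t ^+ d)%R))%E.

End defs.

(* Main.v *)
Require Import Defs.
From HB Require Import structures.
From mathcomp Require Import all_boot all_order all_algebra.
From mathcomp Require Import all_classical all_reals all_analysis.
From mathcomp Require Import measurable_realfun.
From mathcomp Require Import lra ring.
Import Order.TTheory GRing.Theory Num.Theory.
Import numFieldNormedType.Exports.
Local Open Scope classical_set_scope.
Local Open Scope ring_scope.
Set Implicit Arguments. Unset Strict Implicit. Unset Printing Implicit Defensive.

Section iint_lemmas.
Variable R : realType.
Local Notation mu := (@lebesgue_measure R).
Local Open Scope ereal_scope.

Lemma iint_ge0 n (f : n.-tuple R -> \bar R) : (forall y, 0 <= f y) -> 0 <= iint f.
Proof.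
elim: n f => [|n IH] f f0 /=; first exact: f0.
by apply: integral_ge0 => r _; apply: IH => y.
Qed.

Lemma measurable_cons_r n (r : R) :
  measurable_fun [set: n.-tuple R] (fun z => cons_tuple r z).
Proof.
exact: (measurable_cons (f := cst r) (g := id)).
Qed.

Lemma iint_meas n dX (X : measurableType dX) (F : X -> n.-tuple R -> \bar R) :
  measurable_fun setT (fun p : X * n.-tuple R => F p.1 p.2) ->
  (forall x y, 0 <= F x y) ->
  measurable_fun setT (fun x => iint (F x)).
Proof.
elim: n dX X F => [|n IH] dX X F mF F0 /=.
  have -> : (fun x => F x [tuple]) =
    (fun p : X * 0.-tuple R => F p.1 p.2) \o (fun x => (x, [tuple])) by [].
  apply: (measurableT_comp mF).
  by apply: measurable_fun_pair => //.
pose H := fun p : X * measurableTypeR R => iint (fun z => F p.1 (cons_tuple p.2 z)).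
have mH : measurable_fun setT H.
  apply: (IH _ _ (fun p z => F p.1 (cons_tuple p.2 z))); last by move=> *; exact: F0.
  have -> : (fun p : (X * measurableTypeR R) * n.-tuple R => F p.1.1 (cons_tuple p.1.2 p.2)) =
    (fun p : X * n.+1.-tuple R => F p.1 p.2) \o
    (fun q : (X * measurableTypeR R) * n.-tuple R => (q.1.1, cons_tuple q.1.2 q.2)) by [].
  apply: (measurableT_comp mF) => /=.
  apply: measurable_fun_pair => /=.
    exact: measurableT_comp.
  have h := (@measurable_cons _ _ _ R (fun q : (X * measurableTypeR R) * n.-tuple R => q.1.2) n snd).
  apply: h => //. exact: measurableT_comp.
have := @measurable_fun_fubini_tonelli_F _ _ X (measurableTypeR R) R mu H mH.
apply => x; rewrite /H; apply: iint_ge0 => y; exact: F0.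
Qed.

Lemma meas_cons_sec n (f : n.+1.-tuple R -> \bar R) (r : R) :
  measurable_fun setT f -> measurable_fun setT (fun z : n.-tuple R => f (cons_tuple r z)).
Proof.
move=> mf; apply: (measurableT_comp mf).
have h := (@measurable_cons _ _ _ R (fun _ : n.-tuple R => r) n id).
by apply: h.
Qed.

Lemma meas_iint_sec n (f : n.+1.-tuple R -> \bar R) :
  measurable_fun setT f -> (forall y, 0 <= f y) ->
  measurable_fun setT (fun r : measurableTypeR R => iint (fun z => f (cons_tuple r z))).
Proof.
move=> mf f0.
apply: (iint_meas (F := fun (r : measurableTypeR R) z => f (cons_tuple r z))); last by move=> *; exact: f0.
have -> : (fun p : measurableTypeR R * n.-tuple R => f (cons_tuple p.1 p.2)) =
  f \o (fun p : measurableTypeR R * n.-tuple R => cons_tuple p.1 p.2) by [].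
apply: (measurableT_comp mf).
have h := (@measurable_cons _ _ _ R (fun p : measurableTypeR R * n.-tuple R => p.1) n snd).
have h1 := h measurable_fst measurable_snd.
exact: h1.
Qed.

Lemma iintD n (f g : n.-tuple R -> \bar R) :
  measurable_fun setT f -> measurable_fun setT g ->
  (forall y, 0 <= f y) -> (forall y, 0 <= g y) ->
  iint (fun y => f y + g y) = iint f + iint g.
Proof.
elim: n f g => [|n IH] f g mf mg f0 g0 //=.
rewrite (eq_integral (fun r : measurableTypeR R =>
   iint (fun z => f (cons_tuple r z)) + iint (fun z => g (cons_tuple r z)))); last first.
  by move=> r _; apply: IH => //; apply: meas_cons_sec.
apply: ge0_integralD => //.
- by move=> r _; apply: iint_ge0.
- exact: meas_iint_sec.
- by move=> r _; apply: iint_ge0.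
- exact: meas_iint_sec.
Qed.

Lemma iint_le n (f g : n.-tuple R -> \bar R) :
  measurable_fun setT f -> measurable_fun setT g ->
  (forall y, 0 <= f y) -> (forall y, f y <= g y) ->
  iint f <= iint g.
Proof.
elim: n f g => [|n IH] f g mf mg f0 fg //=.
apply: ge0_le_integral => //.
- by move=> r _; apply: iint_ge0.
- exact: meas_iint_sec.
- apply: meas_iint_sec => // y; exact: le_trans (fg y).
move=> r _; apply: IH => //; exact: meas_cons_sec.
Qed.


Lemma iint_prod n (g : R -> R) (c : R) : (0 <= c)%R -> (forall x, 0 <= g x)%R ->
  measurable_fun setT g -> \int[mu]_x (g x)%:E = 1 ->
  iint (fun y : n.-tuple R => (c * \prod_(i < n) g (tnth y i))%:E) = c%:E.
Proof.
move=> + g0 mg g1; elim: n c => [|n IH] c c0 /=.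
  by rewrite big_ord0 mulr1.
rewrite (eq_integral (fun r : measurableTypeR R => (c * g r)%:E)); last first.
  move=> r _.
  rewrite -(IH (c * g r)%R); last by rewrite mulr_ge0.
  congr iint; apply: funext => z; congr EFin.
  rewrite big_ord_recl tnth0 mulrA.  congr (_ * _)%R; apply: eq_bigr => i _; by rewrite tnthS.
transitivity (\int[mu]_x (c%:E * (g x)%:E)).
  by apply: eq_integral => x _; rewrite EFinM.
rewrite ge0_integralZl_EFin //.
- by rewrite g1 mule1.
- by move=> x _; rewrite lee_fin.
- exact/measurable_EFinP.
Qed.

End iint_lemmas.

Section E.
Variable R : realType.
Local Open Scope ereal_scope.

Lemma ebound (x1 x2 x3 x4 : \bar R) (K L : R) :
  0 <= x1 -> 0 <= x2 -> (- K)%:E <= x3 -> 0 <= x4 ->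
  x1 + x2 + x3 + x4 <= L%:E ->
  [/\ x1 <= (L + K)%:E, x2 <= (L + K)%:E, x3 <= L%:E & x4 <= (L + K)%:E].
Proof.
move: x1 x2 x3 x4 => [r1||] [r2||] [r3||] [r4||] //=.
rewrite -!EFinD !lee_fin => h1 h2 h3 h4 h5.
by split; lra.
Qed.

Lemma sqnorm_ge0 n (y : n.-tuple R) : (0 <= sqnorm y)%R.
Proof. by apply: sumr_ge0 => i _; exact: sqr_ge0. Qed.

Lemma measurable_sqnorm n : measurable_fun setT (@sqnorm R n).
Proof.
rewrite /sqnorm.
have h := (@measurable_sum _ _ R setT _ (index_enum 'I_n) (fun i (y : n.-tuple R) => (tnth y i ^+ 2)%R)).
apply: h => i.
apply: measurable_funX; exact: measurable_tnth.
Qed.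
End E.

Section P.
Variable R : realType.

Lemma x_le_expR (x : R) : x <= expR x.
Proof. by apply: le_trans (expR_ge1Dx x); lra. Qed.

Lemma ptwise (r a : R) : 0 <= r -> 0 <= a ->
  r * a + r * `|ln r| <= 3 * Num.max (r * a + r * ln r) 0 + 10 * expR (- a / 8).
Proof.
move=> r0 a0.
have e0 : 0 <= expR (- a / 8) := expR_ge0 _.
have m0 : 0 <= Num.max (r * a + r * ln r) 0 by rewrite le_max lexx orbT.
have mf : r * a + r * ln r <= Num.max (r * a + r * ln r) 0 by rewrite le_max lexx.
have [->|rpos] := eqVneq r 0.
  rewrite !mul0r !addr0 maxxx; lra.
have r0' : 0 < r by rewrite lt_neqAle eq_sym rpos r0.
have [r1|r1] := leP 1 r.
  rewrite ger0_norm; last exact: ln_ge0.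
  lra.
have L0 : ln r < 0 by apply: ln_lt0; rewrite r0' r1.
rewrite ltr0_norm //.
have [hb|hb] := leP (- ln r) (a / 2).
  have : r * (- ln r) <= r * (a / 2) by rewrite ler_wpM2l // ltW.
  have : r * (a / 2) = (r * a) / 2 by rewrite mulrA.
  rewrite mulrN; lra.
set b := - ln r.
have rE : r = expR (- b) by rewrite /b opprK lnK // posrE.
have ba : a / 2 < b := hb.
have h1 : r * a <= 8 * expR (- a / 8).
  have ra : r <= expR (- (a / 2)).
    by rewrite rE ler_expR; lra.
  have : a <= 8 * expR (3 * a / 8).
    have := x_le_expR (3 * a / 8).
    have := expR_ge0 (3 * a / 8).
    lra.
  move=> ha.
  apply: (le_trans (y := expR (- (a / 2)) * a)).
    by rewrite ler_wpM2r.
  apply: (le_trans (y := expR (- (a / 2)) * (8 * expR (3 * a / 8)))).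
    by rewrite ler_wpM2l ?expR_ge0.
  rewrite mulrCA -expRD.
  have -> : - (a / 2) + 3 * a / 8 = - a / 8 by field.
  by [].
have h2 : r * b <= 2 * expR (- a / 8).
  rewrite rE.
  have hb2 : b <= 2 * expR (b / 2).
    have := x_le_expR (b / 2). lra.
  apply: (le_trans (y := expR (- b) * (2 * expR (b / 2)))).
    by rewrite ler_wpM2l ?expR_ge0.
  rewrite mulrCA -expRD.
  have -> : - b + b / 2 = - (b / 2) by field.
  rewrite ler_pM2l // ler_expR; lra.
have : r * - ln r = r * b by [].
lra.
Qed.
End P.

Section O.
Variable R : realType.

Lemma tau_ge0 (tau : R -> R) (k : R) : 0 < k ->
  (forall t, derivable tau t 1) -> (forall t, derivable (derive1 tau) t 1) ->
  (forall t, derive1 (derive1 tau) t = 2 * k / tau t) ->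
  tau 0 = 1 -> derive1 tau 0 = 0 -> forall t, 0 <= t -> 0 <= tau t.
Proof.
move=> k0 d1 d2 dd t0 dt0 t tp; rewrite leNgt; apply/negP => tneg.
pose A := [set s : R | 0 <= s /\ tau s <= 0].
have At : A t by split => //; exact: ltW.
have lbA : lbound A 0 by move=> s [].
have hinf : has_inf A by split; [exists t | exists 0].
pose z := inf A.
have z0 : 0 <= z by apply: lb_le_inf => //; exists t.
have Hlt : forall s, 0 <= s -> s < z -> 0 < tau s.
  move=> s s0 sz; rewrite ltNge; apply/negP => ts.
  have : z <= s by apply: ge_inf => //; exists 0.
  by rewrite leNgt sz.
have ct : forall x, {for x, continuous tau}.
  by move=> x; apply/differentiable_continuous; rewrite -derivable1_diffP.
have Hz : tau z <= 0.
  rewrite leNgt; apply/negP => tz.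
  have := cvgr_gt (tau z) (ct z) 0 tz.
  move=> H; have [e /= e0 He] := (nbhs_ballP _ _).1 (H _).
  have [s As sz] := inf_adherent e0 hinf.
  have zs : z <= s by apply: ge_inf => //; exists 0.
  have : 0 < tau s.
    apply: He; rewrite /ball /= distrC ger0_norm; last by rewrite subr_ge0.
    by rewrite ltrBlDl.
  by case: As => _; rewrite leNgt => /negP.
have zpos : 0 < z.
  rewrite lt_neqAle z0 andbT; apply/negP => /eqP z0'.
  by move: Hz; rewrite -z0' t0 ler10.
have hd1 : forall x : R, is_derive x (1:R) tau (derive1 tau x).
  by move=> x; rewrite derive1E; exact: derivableP.
have hd2 : forall x : R, is_derive x (1:R) (derive1 tau) (derive1 (derive1 tau) x).
  by move=> x; rewrite derive1E; exact: derivableP.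
have ct2 : forall x, {for x, continuous (derive1 tau)}.
  by move=> x; apply/differentiable_continuous; rewrite -derivable1_diffP.
have [xi xiI Hxi] := @MVT R tau (derive1 tau) 0 z zpos
  (fun x _ => hd1 x) (continuous_subspaceT (fun x => ct x)).
move: xiI; rewrite in_itv /= => /andP [xi0 xiz].
have dxi : derive1 tau xi < 0.
  move: Hxi; rewrite t0 subr0 => Hxi.
  have : derive1 tau xi * z < 0 by rewrite -Hxi; lra.
  by rewrite pmulr_llt0.
have [eta etaI Heta] := @MVT R (derive1 tau) (derive1 (derive1 tau)) 0 xi xi0
  (fun x _ => hd2 x) (continuous_subspaceT (fun x => ct2 x)).
move: etaI; rewrite in_itv /= => /andP [eta0 etaxi].
have : 0 < tau eta by apply: Hlt; [exact: ltW | exact: lt_trans xiz].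
move=> teta.
have : 0 < derive1 (derive1 tau) eta by rewrite dd; apply: divr_gt0 => //; lra.
move: Heta; rewrite dt0 !subr0 => Heta.
have : derive1 (derive1 tau) eta * xi < 0 by rewrite -Heta.
rewrite pmulr_llt0 //; lra.
Qed.
End O.

Section Q.
Variable R : realType.

Lemma dP_mono (P dP : R -> R) :
  (forall x : R, 0 < x -> is_derive x 1 P (dP x)) ->
  ((fun h : R => h^-1 * (P h - P 0)) @ 0^'+ --> dP 0) ->
  (forall x y l : R, 0 <= x -> 0 <= y -> 0 <= l <= 1 ->
     P (l * x + (1 - l) * y) <= l * P x + (1 - l) * P y) ->
  forall s, 0 < s -> dP 0 <= dP s.
Proof.
move=> Pd Pl Pc s s0.
apply: (@le_trans _ _ (s^-1 * (P s - P 0))).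
  apply: (cvgr_to_le Pl).
  near=> h.
  have h0 : 0 < h by near: h; exact: nbhs_right_gt.
  have hs : h < s by near: h; exact: nbhs_right_lt.
  have := Pc s 0 (h / s) (ltW s0) (lexx 0).
  have hs1 : 0 <= h / s <= 1.
    apply/andP; split; first by rewrite divr_ge0 // ltW.
    by rewrite ler_pdivrMr // mul1r ltW.
  move=> /(_ hs1).
  rewrite mulr0 addr0 divfK ?gt_eqF // => Hc.
  have X : P h - P 0 <= h / s * (P s - P 0) by lra.
  apply: (@le_trans _ _ (h^-1 * (h / s * (P s - P 0)))).
    by rewrite ler_wpM2l // invr_ge0 ltW.
  rewrite mulrA mulrA mulVf ?gt_eqF // mul1r. done.
have Hd : (fun h : R => h^-1 *: (P (h *: 1 + s) - P s)) @ 0^' --> dP s.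
  have [ed dv] := Pd s s0.
  rewrite -dv; exact: ed.
have Hd' : (fun h : R => h^-1 *: (P (h *: 1 + s) - P s)) @ 0^'+ --> dP s.
  apply: (cvg_trans _ Hd); apply: cvg_app; apply: within_subset => // x /=.
  exact: lt0r_neq0.
apply: (cvgr_to_ge Hd').
near=> h.
have h0 : 0 < h by near: h; exact: nbhs_right_gt.
have := Pc (s + h) 0 (s / (s + h)) _ (lexx 0).
have sh0 : 0 < s + h by lra.
have hs1 : 0 <= s / (s + h) <= 1.
  apply/andP; split; first by rewrite divr_ge0 // ltW.
  by rewrite ler_pdivrMr // mul1r; lra.
move=> /(_ _ hs1).
rewrite mulr0 addr0 divfK ?gt_eqF //.
move=> /(_ (ltW sh0)) Hc.
rewrite /GRing.scale /= mulr1 (addrC h s).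
set a := P s - P 0.
set b := P (s + h) - P 0.
have key : (s + h) * a <= s * b.
  have : a <= s / (s + h) * b by rewrite /a /b; lra.
  rewrite -(ler_pM2l sh0) mulrA mulrCA divff ?gt_eqF // mulr1. done.
have -> : P (s + h) - P s = b - a by rewrite /a /b; ring.
rewrite -subr_ge0.
have -> : h^-1 * (b - a) - s^-1 * a = (s * b - (s + h) * a) / (s * h).
  by field; apply/andP; split; rewrite gt_eqF.
by apply: divr_ge0; [rewrite subr_ge0 | rewrite mulr_ge0 // ltW].
Unshelve. all: by end_near.
Qed.
End Q.

Section G.
Variable R : realType.

Lemma gauss_iint n :
  iint (fun y : n.-tuple R => (10 * expR (- sqnorm y / 8))%:E) =
  (10 / normal_peak (2:R) ^+ n)%:E.
Proof.
have pk : 0 < normal_peak (2:R) by apply: normal_peak_gt0.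
rewrite -(@iint_prod R n (normal_pdf 0 2) (10 / normal_peak (2:R) ^+ n)); last 4 first.
- by apply: divr_ge0 => //; apply: exprn_ge0; exact: ltW.
- by move=> x; exact: normal_pdf_ge0.
- exact: measurable_normal_pdf.
- exact: integral_normal_pdf.
congr iint; apply: funext => y; congr EFin.
have -> : \prod_(i < n) normal_pdf 0 2 (tnth y i) =
    normal_peak 2 ^+ n * expR (- sqnorm y / 8).
  rewrite /normal_pdf /=.
  have h2 : ((2:R) == 0) = false by rewrite pnatr_eq0.
  rewrite h2 big_split /= prodr_const card_ord; congr (_ * _).
  rewrite /normal_fun -expR_sum; congr expR.
  rewrite /sqnorm mulNr mulr_suml -sumrN; apply: eq_bigr => i _.
  rewrite subr0 mulNr; congr (- _); congr (_ * _).
  by rewrite expr2 -mulr_natr; field.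
rewrite mulrA divfK //; apply: expf_neq0; exact: lt0r_neq0.
Qed.

Lemma Gfun_ge0 (dP : R -> R) u : (forall s, 0 < s -> dP 0 <= dP s) ->
  (0 <= Gfun dP u)%E.
Proof.
move=> dPm; apply: integral_ge0 => v; rewrite /= in_itv /= => /andP [v0 _].
apply: integral_ge0 => s; rewrite /= in_itv /= => /andP [s0 _].
rewrite lee_fin.
have [->|sn0] := eqVneq s 0; first by rewrite invr0 mulr0.
apply: divr_ge0; last by [].
rewrite subr_ge0; apply: dPm; rewrite lt_neqAle eq_sym sn0 s0. done.
Qed.

Lemma ptwise2 (r a : R) : 0 <= r -> 0 <= a ->
  Num.max (- (r * a + r * ln r)) 0 <= 10 * expR (- a / 8).
Proof.
move=> r0 a0; have h := ptwise r0 a0.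
have e0 : 0 <= expR (- a / 8) := expR_ge0 _.
have l1 : - ln r <= `|ln r| by rewrite -normrN ler_norm.
have l2 : r * - ln r <= r * `|ln r| by rewrite ler_wpM2l.
have ra : 0 <= r * a by rewrite mulr_ge0.
rewrite ge_max; apply/andP; split; last lra.
have [fp|fn] := leP 0 (r * a + r * ln r).
  lra.
have : Num.max (r * a + r * ln r) 0 = 0 by apply/max_idPr; exact: ltW.
move=> hm; rewrite hm in h.
have : r * - ln r = - (r * ln r) by rewrite mulrN.
lra.
Qed.
End G.

Theorem lemma3p3 (R : realType) (d : nat) (eps kappa theta Lambda : R)
  (P dP : R -> R) (tau : R -> R)
  (Rho : R -> d.-tuple R -> R) (U : R -> d.-tuple R -> d.-tuple R) :
  (0 < d)%N ->
  0 <= eps ->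
  (* P in C^1([0,oo)) /\ C^2((0,oo)), P >= 0, convex, with P' = dP *)
  (forall x : R, 0 <= x -> 0 <= P x) ->
  (forall x : R, 0 < x -> is_derive x 1 P (dP x)) ->
  ((fun h : R => h^-1 * (P h - P 0)) @ 0^'+ --> dP 0) ->
  {within `[0, +oo[, continuous dP} ->
  (forall x : R, 0 < x -> derivable dP x 1) ->
  (forall x : R, 0 < x -> {for x, continuous (derive1 dP)}) ->
  (forall x y l : R, 0 <= x -> 0 <= y -> 0 <= l <= 1 ->
     P (l * x + (1 - l) * y) <= l * P x + (1 - l) * P y) ->
  kappa = dP 0 -> 0 < kappa ->
  0 < theta ->
  (* tau solves tau'' = 2 kappa / tau, tau(0) = 1, tau'(0) = 0 *)
  (forall t : R, derivable tau t 1) ->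
  (forall t : R, derivable (derive1 tau) t 1) ->
  (forall t : R, derive1 (derive1 tau) t = 2 * kappa / tau t) ->
  tau 0 = 1 -> derive1 tau 0 = 0 ->
  (* nonnegative, measurable density *)
  (forall t y, 0 <= t -> 0 <= Rho t y) ->
  (forall t, 0 <= t -> measurable_fun setT (Rho t)) ->
  (* bounded mass *)
  (exists M : R, forall t, 0 <= t -> (iint (fun y => (Rho t y)%:E) <= M%:E)%E) ->
  (* bounded pseudo-energy *)
  (forall t, 0 <= t -> (energy eps kappa theta dP tau Rho U t <= Lambda%:E)%E) ->
  exists C0 : R, 0 < C0 /\
    forall t, 0 <= t ->
      ((1 / (2 * tau t ^+ 2))%R%:E * iint (fun y => (Rho t y * sqnorm (U t y))%R%:E)
       + (eps ^+ 2 / (2 * tau t ^+ 2))%R%:E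
           * iint (fun y => (gradsq (fun z => Num.sqrt (Rho t z)) y)%R%:E)
       + kappa%:E * iint (fun y =>
           (Rho t y * (1 + sqnorm y + `|ln (Rho t y)|))%R%:E)
       + (tau t ^+ d)%R%:E
           * iint (fun y => Gfun dP (theta * Rho t y / tau t ^+ d)%R)
       <= C0%:E)%E.
Proof.
move=> d0 eps0 P0 Pd Pl dPc dPd dPdc Pc kE k0 th0 td1 td2 tdd t0 dt0 Rho0 mRho [M HM] HE.
have tau_nn := tau_ge0 k0 td1 td2 tdd t0 dt0.
have dPm : forall s, 0 < s -> dP 0 <= dP s := dP_mono Pd Pl Pc.
pose c0 : R := 10 / normal_peak (2:R) ^+ d.
have c00 : 0 <= c0.
  by apply: divr_ge0 => //; apply: exprn_ge0; apply: ltW; apply: normal_peak_gt0.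
pose K := kappa * c0.
have K0 : 0 <= K by apply: mulr_ge0 => //; exact: ltW.
exists ((2 + theta + 3) * `|Lambda + K| + kappa * `|M| + K + 1).
split.
  have : 0 <= (2 + theta + 3) * `|Lambda + K| by apply: mulr_ge0 => //; lra.
  have : 0 <= kappa * `|M| by apply: mulr_ge0 => //; lra.
  lra.
move=> t tp.
have HEt := HE t tp; rewrite /energy /sint /= in HEt.
set A1 := iint (fun y => (Rho t y * sqnorm (U t y))%:E) in HEt *.
set A2 := iint (fun y => (gradsq _ y)%:E) in HEt *.
set Pp := iint (fun y => (Num.max (Rho t y * sqnorm y + Rho t y * ln (Rho t y)) 0)%:E) in HEt *.
set N := iint (fun y => (Num.max (- (Rho t y * sqnorm y + Rho t y * ln (Rho t y))) 0)%:E) in HEt *.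
set IG := iint (fun y => Gfun dP _) in HEt *.
set I := iint (fun y => (Rho t y * (1 + sqnorm y + `|ln (Rho t y)|))%:E).
have R0 := Rho0 t _ tp.
have mR := mRho t tp.
have hA1 : (0 <= A1)%E.
  by apply: iint_ge0 => y; rewrite lee_fin; apply: mulr_ge0 => //; exact: sqnorm_ge0.
have hA2 : (0 <= A2)%E.
  by apply: iint_ge0 => y; rewrite lee_fin; apply: sumr_ge0 => i _; exact: sqr_ge0.
have hIG : (0 <= IG)%E by apply: iint_ge0 => y; exact: Gfun_ge0.
have hPp : (0 <= Pp)%E by apply: iint_ge0 => y; rewrite lee_fin le_max lexx orbT.
have hN0 : (0 <= N)%E by apply: iint_ge0 => y; rewrite lee_fin le_max lexx orbT.
have mf : measurable_fun setT (fun y => Rho t y * sqnorm y + Rho t y * ln (Rho t y)).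
  apply: measurable_funD; apply: measurable_funM => //.
  - exact: measurable_sqnorm.
  - exact: measurableT_comp (@measurable_ln R) mR.
have mH : measurable_fun setT (fun y : d.-tuple R => (10 * expR (- sqnorm y / 8))%:E).
  apply/measurable_EFinP; apply: measurable_funM => //.
  apply: measurableT_comp (@measurable_expR R) _.
  apply: measurable_funM => //; apply: measurable_funN; exact: measurable_sqnorm.
have mFp : measurable_fun setT (fun y => (Num.max (Rho t y * sqnorm y + Rho t y * ln (Rho t y)) 0)%:E).
  by apply/measurable_EFinP; apply: measurable_maxr.
have mFn : measurable_fun setT (fun y => (Num.max (- (Rho t y * sqnorm y + Rho t y * ln (Rho t y))) 0)%:E).
  by apply/measurable_EFinP; apply: measurable_maxr => //; apply: measurable_funN.
have hN : (N <= c0%:E)%E.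
  rewrite -gauss_iint; apply: iint_le => //.
  - by move=> y; rewrite lee_fin le_max lexx orbT.
  - move=> y; rewrite lee_fin; apply: ptwise2 => //; exact: sqnorm_ge0.
have mR' : measurable_fun setT (fun y => (Rho t y)%:E) by apply/measurable_EFinP.
have hI : (I <= M%:E + (Pp + Pp + Pp) + c0%:E)%E.
  have HM1 := HM t tp.
  apply: (@le_trans _ _ (iint (fun y => (Rho t y)%:E) + (Pp + Pp + Pp) + c0%:E)%E); last first.
    by rewrite leeD2r // leeD2r.
  rewrite -gauss_iint /Pp -!iintD //; first last.
  all: try (move=> y; repeat apply: adde_ge0; rewrite lee_fin ?le_max ?lexx ?orbT ?mulr_ge0 ?expR_ge0 //; fail).
  all: try (by repeat apply: emeasurable_funD).
  apply: iint_le => //.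
  - apply/measurable_EFinP; apply: measurable_funM => //.
    apply: measurable_funD; first apply: measurable_funD => //.
      exact: measurable_sqnorm.
    apply: measurableT_comp; first exact: normr_measurable.
    exact: measurableT_comp (@measurable_ln R) mR.
  - by repeat apply: emeasurable_funD.
  - by move=> y; rewrite lee_fin mulr_ge0 // addr_ge0 // addr_ge0 // sqnorm_ge0.
  move=> y; rewrite -!EFinD lee_fin.
  have := ptwise (R0 y) (sqnorm_ge0 y).
  rewrite mulrDr mulrDr mulr1; lra.
have [n Nn /andP[n0 nc]] : exists2 n : R, N = n%:E & 0 <= n <= c0.
  clearbody N; move: hN0 hN; case: N HEt => [n'| |] //= _ h1 h2.
  by exists n' => //; rewrite -!lee_fin h1 h2.
have kp : 0 < kappa := k0.
have hx1 : (0 <= (1 / (2 * tau t ^+ 2))%:E * A1)%E.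
  by apply: mule_ge0 => //; rewrite lee_fin divr_ge0 // mulr_ge0 // sqr_ge0.
have hx2 : (0 <= (eps ^+ 2 / (2 * tau t ^+ 2))%:E * A2)%E.
  by apply: mule_ge0 => //; rewrite lee_fin divr_ge0 ?sqr_ge0 // mulr_ge0 // sqr_ge0.
have hx4 : (0 <= (tau t ^+ d / theta)%:E * IG)%E.
  by apply: mule_ge0 => //; rewrite lee_fin divr_ge0 ?exprn_ge0 ?tau_nn // ltW.
have hx3 : ((- K)%:E <= kappa%:E * (Pp - N))%E.
  rewrite Nn; clearbody Pp; move: hPp; case: Pp HEt hI => [p| |] //= _ _ hp.
    rewrite -EFinB -EFinM lee_fin.
    rewrite lee_fin in hp.
    have : kappa * n <= kappa * c0 by rewrite ler_wpM2l // ltW.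
    have : 0 <= kappa * p by rewrite mulr_ge0 // ltW.
    rewrite /K mulrBr; lra.
  by rewrite gt0_muley ?lee_fin ?leey // lte_fin.
have [b1 b2 b3 b4] := ebound hx1 hx2 hx3 hx4 HEt.
have [p Pe p0] : exists2 p : R, Pp = p%:E & kappa * p <= Lambda + K.
  move: b3 hPp; rewrite Nn; clearbody Pp; case: Pp HEt hI hx3 => [p| |] //= _ _ _ h3 hp.
    exists p => //.
    rewrite -EFinB -EFinM lee_fin in h3.
    have : kappa * n <= kappa * c0 by rewrite ler_wpM2l // ltW.
    rewrite /K; move: h3; rewrite mulrBr; lra.
  by move: h3; rewrite gt0_muley ?lte_fin.
have hKI : (kappa%:E * I <= (kappa * (M + 3 * p + c0))%:E)%E.
  rewrite EFinM; apply: lee_pmul => //.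
  - by rewrite lee_fin ltW.
  - by apply: iint_ge0 => y; rewrite lee_fin mulr_ge0 // addr_ge0 // addr_ge0 // sqnorm_ge0.
  apply: (le_trans hI); rewrite Pe -!EFinD lee_fin; lra.
have hG : ((tau t ^+ d)%:E * IG <= (theta * (Lambda + K))%:E)%E.
  have -> : (tau t ^+ d)%:E = (theta%:E * (tau t ^+ d / theta)%:E)%E.
    by rewrite -EFinM; congr EFin; field; rewrite gt_eqF.
  rewrite -muleA [X in (_ <= X)%E]EFinM; apply: lee_pmul => //; by rewrite lee_fin ltW.
apply: (le_trans (leeD (leeD (leeD b1 b2) hKI) hG)).
rewrite -!EFinD lee_fin.
have l1 : Lambda + K <= `|Lambda + K| := ler_norm _.
have l2 : kappa * M <= kappa * `|M| by rewrite ler_wpM2l ?ler_norm // ltW.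
have l3 : theta * (Lambda + K) <= theta * `|Lambda + K| by rewrite ler_wpM2l // ltW.
have e1 : (2 + theta + 3) * `|Lambda + K| = 5 * `|Lambda + K| + theta * `|Lambda + K| by ring.
have e2 : kappa * (M + 3 * p + c0) = kappa * M + 3 * (kappa * p) + K by rewrite /K; ring.
rewrite e1 e2; lra.
Qed.
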